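(* Let $n\ge 1$, $h=1/(2n)$. Consider a fine grid on $\Omega^f=[0,1]\times[0,1]$ with points $((i-1)h,(j-1)h)$, $i=1,\dots,2n$ (periodic in $x$), where row $j=1$ lies on the interface $\Gamma=\{y=0\}$ (no ghost points are used on the fine side); and a coarse grid on $\Omega^c=[0,1]\times[-1,0]$ with points $(2(i-1)h,2(j-n)h)$, $i=1,\dots,n$ (periodic in $x$), where row $j=n$ lies on $\Gamma$ and $j=n+1$ is a row of ghost points. Let $(\boldsymbol u,\boldsymbol v)_h=h^2\sum_i\sum_j w^f_ju_{ij}v_{ij}$ and $(\boldsymbol u,\boldsymbol v)_{2h}=(2h)^2\sum_i\sum_j w^c_ju_{ij}v_{ij}$ be weighted inner products on the fine and coarse grids (weights positive; $w_1:=w^f_1$ is the weight of the interface row of the fine grid), and let $\langle\boldsymbol u_\Gamma,\boldsymbol v_\Gamma\rangle_h=h\sum_{i=1}^{2n}u_iv_i$, $\langle\boldsymbol u_\Gamma,\boldsymbol v_\Gamma\rangle_{2h}=2h\sum_{i=1}^n u_iv_i$. For a grid function $\boldsymbol u$, $\boldsymbol u_\Gamma$ (also written $\boldsymbol u|_\Gamma$) is its restriction to the interface row. Assume a linear operator $G_f(\mu)$ on fine grid functions (no ghost points) with a linear map $\boldsymbol v\mapsto\boldsymbol v'_\Gamma\in\mathbb R^{2n}$ such that $(\boldsymbol u,G_f(\mu)\boldsymbol v)_h=-S_f(\boldsymbol u,\boldsymbol v)-\langle\boldsymbol u_\Gamma,\boldsymbol v'_\Gamma\rangle_h$ for all $\boldsymbol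 u,\boldsymbol v$, and a linear operator $\widetilde G_c(\mu)$ on coarse grid functions with ghost points with a linear map $\widetilde{\boldsymbol v}\mapsto\widetilde{\boldsymbol v}'_\Gamma\in\mathbb R^n$ such that $(\boldsymbol u,\widetilde G_c(\mu)\widetilde{\boldsymbol v})_{2h}=-S_c(\boldsymbol u,\boldsymbol v)+\langle\boldsymbol u_\Gamma,\widetilde{\boldsymbol v}'_\Gamma\rangle_{2h}$ for all $\boldsymbol u,\widetilde{\boldsymbol v}$, where $S_f,S_c$ are symmetric positive semi-definite bilinear forms. Let $\boldsymbol\rho^f,\boldsymbol\rho^c$ be diagonal matrices with positive diagonal entries, and let $\mathcal P:\mathbb R^n\to\mathbb R^{2n}$ and $\mathcal R:\mathbb R^{2n}\to\mathbb R^n$ be linear maps with $\mathcal P=2\mathcal R^T$. Consider smooth time-dependent grid functions $\boldsymbol f(t)$ (fine) and $\widetilde{\boldsymbol c}(t)$ (coarse, with ghost points) satisfying, for all $t$: $\boldsymbol\rho^c\boldsymbol c_{tt}=\widetilde G_c(\mu)\widetilde{\boldsymbol c}$; $\boldsymbol f_{:,1}=\mathcal P(\boldsymbol c_{:,n})$; $(\boldsymbol\rho^f\boldsymbol f_{tt})_{:,1}=(G_f(\mu)\boldsymbol f)_{:,1}+\boldsymbol\eta$ and $(\boldsymbol\rho^f\boldsymbol f_{tt})_{:,j}=(G_f(\mu)\boldsymbol f)_{:,j}$ for $j\ge2$, where $\boldsymbol\eta=\boldsymbol\rho^f|_\Gamma\,\mathcal P\big((\boldsymbol\rho^c)^{-1}\widetilde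 G_c(\mu)\widetilde{\boldsymbol c}|_\Gamma\big)-G_f(\mu)\boldsymbol f|_\Gamma$; and $\widetilde{\boldsymbol c}'_\Gamma=\mathcal R\big(\boldsymbol f'_\Gamma-hw_1\boldsymbol\eta\big)$. Then $\frac{d}{dt}\left[(\boldsymbol f_t,\boldsymbol\rho^f\boldsymbol f_t)_h+S_f(\boldsymbol f,\boldsymbol f)+(\boldsymbol c_t,\boldsymbol\rho^c\boldsymbol c_t)_{2h}+S_c(\boldsymbol c,\boldsymbol c)\right]=0.$
   Context: This is the ''improved SBP-GP'' semi-discretization of the two-dimensional acoustic wave equation $\rho u_{tt}=\nabla\cdot(\mu\nabla u)$ across a 1:2 mesh refinement interface at $y=0$, with continuity of solution and normal flux imposed using only ghost points on the coarse side; periodic in $x$, and contributions from the outer boundaries are not included (as encoded in the assumed summation-by-parts identities). $\boldsymbol c$ denotes the restriction of $\widetilde{\boldsymbol c}$ to non-ghost points; colon notation $\boldsymbol f_{:,j}$ means the $j$-th row (all $i$); $\boldsymbol\rho^f|_\Gamma$ is the diagonal matrix of $\boldsymbol\rho^f$-entries on the interface row. In the paper $\boldsymbol v'_\Gamma$ has entries $\mu_{i,1}\boldsymbol b_1^T\boldsymbol v_{i,:}$, a boundary approximation of $\mu\,\partial_y v$. *)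

(* Defs.v *)
From HB Require Import structures.
From mathcomp Require Import all_boot all_order all_algebra.
From mathcomp Require Import all_classical all_reals all_analysis.
Set Implicit Arguments. Unset Strict Implicit. Unset Printing Implicit Defensive.
Import Order.TTheory GRing.Theory Num.Theory.
Local Open Scope ring_scope.

(* Grid functions are matrices M i j : i = x-index (periodic), j = y-index.
   Fine grid (no ghost points):  'M[R]_(2n, 2n+1), column j (0-based) is
     paper row j+1, y = j*h; column 0 is the interface Gamma.
   Coarse grid without ghosts: 'M[R]_(n, n+1), column j (0-based) is paper
     row j, y = 2(j-n)h; column n (= ord_max) is the interface Gamma.
   Coarse grid with ghosts: 'M[R]_(n, n+2), extra column n+1 = ghost row. *)

Section Grid.
Variable R : realType.

Definition hstep (n : nat) : R := ((n.*2)%:R)^-1.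

Definition restr (n : nat) (v : 'M[R]_(n, n.+2)) : 'M[R]_(n, n.+1) :=
  \matrix_(i, j) v i (widen_ord (leqnSn n.+1) j).

Definition fGamma (n : nat) (u : 'M[R]_(n.*2, (n.*2).+1)) : 'cV[R]_(n.*2) :=
  col ord0 u.
Definition cGamma (n : nat) (u : 'M[R]_(n, n.+1)) : 'cV[R]_n :=
  col ord_max u.

Definition ip_f (n : nat) (wf : 'I_(n.*2).+1 -> R) (u v : 'M[R]_(n.*2, (n.*2).+1)) : R :=
  hstep n ^+ 2 * \sum_i \sum_j wf j * u i j * v i j.
Definition ip_c (n : nat) (wc : 'I_n.+1 -> R) (u v : 'M[R]_(n, n.+1)) : R :=
  (2 * hstep n) ^+ 2 * \sum_i \sum_j wc j * u i j * v i j.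
Definition bd_f (n : nat) (u v : 'cV[R]_(n.*2)) : R :=
  hstep n * \sum_i u i 0 * v i 0.
Definition bd_c (n : nat) (u v : 'cV[R]_n) : R :=
  (2 * hstep n) * \sum_i u i 0 * v i 0.

(* action of a diagonal matrix (on grid points), given by its diagonal entries d *)
Definition dmul (m k : nat) (d u : 'M[R]_(m, k)) : 'M[R]_(m, k) :=
  \matrix_(i, j) (d i j * u i j).
Definition dinvmul (m k : nat) (d u : 'M[R]_(m, k)) : 'M[R]_(m, k) :=
  \matrix_(i, j) ((d i j)^-1 * u i j).

Definition sym_psd_bilinear (V : lmodType R) (S : V -> V -> R) : Prop :=
  [/\ (forall a u1 u2 v, S (a *: u1 + u2) v = a * S u1 v + S u2 v),
      (forall u v, S u v = S v u)
    & (forall u, 0 <= S u u)].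

End Grid.

(* Main.v *)
Require Import Defs.
From HB Require Import structures.
From mathcomp Require Import all_boot all_order all_algebra.
From mathcomp Require Import all_classical all_reals all_analysis.
From mathcomp Require Import ring.
Import Order.TTheory GRing.Theory Num.Theory.
Local Open Scope ring_scope.

Set Implicit Arguments. Unset Strict Implicit.
Section H.
Variable R : realType.

Lemma entry_derive m k (g : R -> 'M[R]_(m,k)) t i j :
  derivable g t 1 -> is_derive t (1:R) (fun s => g s i j) ('D_1 g t i j).
Proof.
move=> dg; rewrite derive_mx // mxE; apply: derivableP.
exact: (proj1 (derivable_mxP g t 1) dg i j).
Qed.

Lemma is_derive_sumf n (F : 'I_n -> R -> R) dF t :
  (forall i, is_derive t (1:R) (F i) (dF i)) ->
  is_derive t (1:R) (fun s => \sum_i F i s) (\sum_i dF i).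
Proof.
move=> h; rewrite -fct_sumE; exact: is_derive_sum.
Qed.

Lemma is_derive_mulr2 (F G : R -> R) dF dG t :
  is_derive t (1:R) F dF -> is_derive t (1:R) G dG ->
  is_derive t (1:R) (fun s => F s * G s) (F t * dG + G t * dF).
Proof.
move=> hF hG; have := is_deriveM hF hG; exact.
Qed.

Definition linf m k (L : 'M[R]_(m,k) -> R) :=
  forall a u1 u2, L (a *: u1 + u2) = a * L u1 + L u2.

Lemma linf0 m k (L : 'M[R]_(m,k) -> R) : linf L -> L 0 = 0.
Proof.
move=> hL; have := hL 1 0 0; rewrite scale1r addr0 mul1r.
by rewrite -{1}[L 0]addr0 => /addrI ->.
Qed.

Lemma linfD m k (L : 'M[R]_(m,k) -> R) : linf L -> forall u v, L (u + v) = L u + L v.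
Proof. by move=> hL u v; rewrite -[u]scale1r hL mul1r scale1r. Qed.

Lemma linfZ m k (L : 'M[R]_(m,k) -> R) : linf L -> forall a u, L (a *: u) = a * L u.
Proof. by move=> hL a u; rewrite -[a *: u]addr0 hL linf0 // addr0. Qed.

Lemma linf_sum m k (L : 'M[R]_(m,k) -> R) I (r : seq I) (P : pred I) F :
  linf L -> L (\sum_(i <- r | P i) F i) = \sum_(i <- r | P i) L (F i).
Proof.
move=> hL; apply: (big_morph L (id1 := 0) (op1 := +%R)); first exact: linfD.
exact: linf0.
Qed.

Lemma expand m k (L : 'M[R]_(m,k) -> R) : linf L -> forall u,
  L u = \sum_i \sum_j u i j * L (delta_mx i j).
Proof.
move=> hL u; rewrite {1}(matrix_sum_delta u) linf_sum //; apply: eq_bigr => i _.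
rewrite linf_sum //; apply: eq_bigr => j _; exact: linfZ.
Qed.

Lemma deriv_lin m k (L : 'M[R]_(m,k) -> R) (g : R -> 'M[R]_(m,k)) t :
  linf L -> derivable g t 1 -> is_derive t (1:R) (fun s => L (g s)) (L ('D_1 g t)).
Proof.
move=> hL dg.
have -> : (fun s => L (g s)) = (fun s => \sum_i \sum_j g s i j * L (delta_mx i j)).
  by apply/funext => s; exact: expand.
rewrite (expand hL); apply: is_derive_sumf => i; apply: is_derive_sumf => j.
apply: is_derive_eq; first exact: (is_derive_mulr2 (entry_derive i j dg) (is_derive_cst _ _ _)).
by rewrite mulr0 add0r mulrC.
Qed.

Lemma deriv_bil m k (B : 'M[R]_(m,k) -> 'M[R]_(m,k) -> R)
  (hl : forall v, linf (B^~ v)) (hr : forall u, linf (B u)) (g h : R -> 'M[R]_(m,k)) (t : R) :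
  derivable g t 1 -> derivable h t 1 ->
  is_derive t (1:R) (fun s => B (g s) (h s)) (B ('D_1 g t) (h t) + B (g t) ('D_1 h t)).
Proof.
move=> dg dh.
have -> : (fun s => B (g s) (h s)) = (fun s => \sum_i \sum_j g s i j * B (delta_mx i j) (h s)).
  by apply/funext => s; exact: (expand (hl (h s))).
have E1 := expand (hl (h t)) ('D_1 g t); have E2 := expand (hl ('D_1 h t)) (g t).
simpl in E1, E2; rewrite E1 E2.
rewrite -big_split; apply: is_derive_sumf => i; rewrite -big_split; apply: is_derive_sumf => j.
apply: is_derive_eq.
  exact: (is_derive_mulr2 (entry_derive i j dg) (deriv_lin (hr (delta_mx i j)) dh)).
by rewrite addrC mulrC.
Qed.

Lemma is_derive_add2 (F G : R -> R) dF dG t :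
  is_derive t (1:R) F dF -> is_derive t (1:R) G dG ->
  is_derive t (1:R) (fun s => F s + G s) (dF + dG).
Proof. move=> hF hG; have := is_deriveD hF hG; exact. Qed.

Lemma is_derive_uniq (F : R -> R) t a b :
  is_derive t (1:R) F a -> is_derive t (1:R) F b -> a = b.
Proof. by move=> [_ <-] [_ <-]. Qed.

Lemma ip_f_linl n (wf : 'I_(n.*2).+1 -> R) v : linf (fun u => ip_f wf u v).
Proof.
move=> a u1 u2; rewrite /ip_f [a * (_ * _)]mulrCA -mulrDr; congr (_ * _).
rewrite big_distrr -big_split; apply: eq_bigr => i _.
rewrite big_distrr -big_split; apply: eq_bigr => j _; rewrite !mxE /=; ring.
Qed.

Lemma ip_f_linr n (wf : 'I_(n.*2).+1 -> R) u : linf (ip_f wf u).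
Proof.
move=> a u1 u2; rewrite /ip_f [a * (_ * _)]mulrCA -mulrDr; congr (_ * _).
rewrite big_distrr -big_split; apply: eq_bigr => i _.
rewrite big_distrr -big_split; apply: eq_bigr => j _; rewrite !mxE /=; ring.
Qed.

Lemma ip_c_linl n (wc : 'I_n.+1 -> R) v : linf (fun u => ip_c wc u v).
Proof.
move=> a u1 u2; rewrite /ip_c [a * (_ * _)]mulrCA -mulrDr; congr (_ * _).
rewrite big_distrr -big_split; apply: eq_bigr => i _.
rewrite big_distrr -big_split; apply: eq_bigr => j _; rewrite !mxE /=; ring.
Qed.

Lemma ip_c_linr n (wc : 'I_n.+1 -> R) u : linf (ip_c wc u).
Proof.
move=> a u1 u2; rewrite /ip_c [a * (_ * _)]mulrCA -mulrDr; congr (_ * _).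
rewrite big_distrr -big_split; apply: eq_bigr => i _.
rewrite big_distrr -big_split; apply: eq_bigr => j _; rewrite !mxE /=; ring.
Qed.

Lemma dmul_lin m k (d : 'M[R]_(m,k)) a u1 u2 :
  dmul d (a *: u1 + u2) = a *: dmul d u1 + dmul d u2.
Proof. apply/matrixP => i j; rewrite !mxE; ring. Qed.

Lemma linf_comp m k (L : 'M[R]_(m,k) -> R) (d : 'M[R]_(m,k)) :
  linf L -> linf (fun v => L (dmul d v)).
Proof. by move=> hL a u1 u2 /=; rewrite dmul_lin hL. Qed.

Lemma ip_f_sym n (wf : 'I_(n.*2).+1 -> R) rf u v :
  ip_f wf u (dmul rf v) = ip_f wf v (dmul rf u).
Proof.
rewrite /ip_f; congr (_ * _); apply: eq_bigr => i _; apply: eq_bigr => j _.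
rewrite !mxE; ring.
Qed.

Lemma ip_c_sym n (wc : 'I_n.+1 -> R) rc u v :
  ip_c wc u (dmul rc v) = ip_c wc v (dmul rc u).
Proof.
rewrite /ip_c; congr (_ * _); apply: eq_bigr => i _; apply: eq_bigr => j _.
rewrite !mxE; ring.
Qed.

Lemma spd_linl m k (S : 'M[R]_(m,k) -> 'M[R]_(m,k) -> R) :
  sym_psd_bilinear S -> forall v, linf (S^~ v).
Proof. by case=> h _ _ v a u1 u2 /=; rewrite h. Qed.

Lemma spd_linr m k (S : 'M[R]_(m,k) -> 'M[R]_(m,k) -> R) :
  sym_psd_bilinear S -> forall u, linf (S u).
Proof. by case=> h hs _ u a u1 u2 /=; rewrite !(hs u) h. Qed.

Lemma bd_cf n (Rm : 'M[R]_(n, n.*2)) x v :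
  bd_c x (Rm *m v) = bd_f ((2 *: Rm^T) *m x) v.
Proof.
rewrite /bd_c /bd_f [2 * _]mulrC -mulrA; congr (_ * _).
rewrite big_distrr /=; under eq_bigr do rewrite mxE big_distrr big_distrr /=.
under [RHS]eq_bigr do rewrite mxE big_distrl /=.
rewrite exchange_big; apply: eq_bigr => i _ /=.
apply: eq_bigr => k _; rewrite !mxE /=; ring.
Qed.

Lemma bd_f_lin n (u : 'cV[R]_(n.*2)) a v1 v2 :
  bd_f u (v1 - a *: v2) = bd_f u v1 - a * bd_f u v2.
Proof.
rewrite /bd_f mulrCA -mulrBr; congr (_ * _).
rewrite big_distrr -sumrB; apply: eq_bigr => i _; rewrite !mxE /=; ring.
Qed.
End H.
Unset Implicit Arguments. Set Strict Implicit.

Theorem mainTheorem2 (R : realType) (n : nat) (n_gt0 : (0 < n)%N)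
  (wf : 'I_(n.*2).+1 -> R) (wc : 'I_n.+1 -> R)
  (wf_pos : forall j, 0 < wf j) (wc_pos : forall j, 0 < wc j)
  (Gf : {linear 'M[R]_(n.*2, (n.*2).+1) -> 'M[R]_(n.*2, (n.*2).+1)})
  (dF : {linear 'M[R]_(n.*2, (n.*2).+1) -> 'cV[R]_(n.*2)})
  (Gc : {linear 'M[R]_(n, n.+2) -> 'M[R]_(n, n.+1)})
  (dC : {linear 'M[R]_(n, n.+2) -> 'cV[R]_n})
  (Sf : 'M[R]_(n.*2, (n.*2).+1) -> 'M[R]_(n.*2, (n.*2).+1) -> R)
  (Sc : 'M[R]_(n, n.+1) -> 'M[R]_(n, n.+1) -> R)
  (Sf_spd : sym_psd_bilinear Sf) (Sc_spd : sym_psd_bilinear Sc)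
  (SBP_f : forall u v, ip_f wf u (Gf v) = - Sf u v - bd_f (fGamma u) (dF v))
  (SBP_c : forall u vt, ip_c wc u (Gc vt) = - Sc u (restr vt) + bd_c (cGamma u) (dC vt))
  (rf : 'M[R]_(n.*2, (n.*2).+1)) (rc : 'M[R]_(n, n.+1))
  (rf_pos : forall i j, 0 < rf i j) (rc_pos : forall i j, 0 < rc i j)
  (P : 'M[R]_(n.*2, n)) (Rm : 'M[R]_(n, n.*2)) (hPR : P = 2 *: Rm^T)
  (f : R -> 'M[R]_(n.*2, (n.*2).+1)) (ct : R -> 'M[R]_(n, n.+2))
  (f_d1 : forall t, derivable f t 1) (f_d2 : forall t, derivable (derive1 f) t 1)
  (c_d1 : forall t, derivable (fun s => restr (ct s)) t 1)
  (c_d2 : forall t, derivable (derive1 (fun s => restr (ct s))) t 1) :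
  let c := fun s => restr (ct s) in
  let eta := fun s =>
    dmul (fGamma rf) (P *m cGamma (dinvmul rc (Gc (ct s)))) - fGamma (Gf (f s)) in
  (forall t, dmul rc (derive1 (derive1 c) t) = Gc (ct t)) ->
  (forall t, fGamma (f t) = P *m cGamma (c t)) ->
  (forall t, fGamma (dmul rf (derive1 (derive1 f) t)) = fGamma (Gf (f t)) + eta t) ->
  (forall t (j : 'I_(n.*2).+1), j != ord0 ->
      col j (dmul rf (derive1 (derive1 f) t)) = col j (Gf (f t))) ->
  (forall t, dC (ct t) = Rm *m (dF (f t) - (hstep R n * wf ord0) *: eta t)) ->
  forall t : R, is_derive t (1 : R)
    (fun s => ip_f wf ((derive1 f) s) (dmul rf ((derive1 f) s)) + Sf (f s) (f s)
            + ip_c wc (derive1 c s) (dmul rc (derive1 c s)) + Sc (c s) (c s)) 0.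
Proof.
move=> c eta Hc Hbd Hf0 Hfj HdC t.
clearbody eta.
have A3 : fGamma (derive1 f t) = P *m cGamma (derive1 c t).
  apply/matrixP => i j; rewrite (ord1 j).
  pose L1 := fun u : 'M[R]_(n.*2,(n.*2).+1) => fGamma u i 0.
  pose L2 := fun v : 'M[R]_(n, n.+1) => (P *m cGamma v) i 0.
  have hL1 : linf L1 by move=> a u1 u2; rewrite /L1 !mxE.
  have hL2 : linf L2.
    move=> a u1 u2; rewrite /L2 !mxE big_distrr -big_split.
    by apply: eq_bigr => k _; rewrite !mxE /=; ring.
  have D1 := deriv_lin hL1 (f_d1 t). have D2 := deriv_lin hL2 (c_d1 t).
  have eqf : (fun s => L1 (f s)) = (fun s => L2 (c s)).
    by apply/funext => s; rewrite /L1 /L2 Hbd.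
  rewrite eqf in D1; have := is_derive_uniq D1 D2.
  by rewrite /L1 /L2 -!derive1E.
have Emat_eq : dmul rf (derive1 (derive1 f) t) =
    Gf (f t) + \matrix_(i, j) (if j == ord0 then eta t i 0 else 0).
  apply/matrixP => i j; rewrite !mxE; case: eqP => [->|/eqP jn0].
    by have := congr1 (fun M : 'M[R]_(n.*2, 1) => M i 0) (Hf0 t); rewrite !mxE.
  by have := congr1 (fun M : 'M[R]_(n.*2, 1) => M i 0) (Hfj t j jn0); rewrite !mxE addr0.
have A1 : ip_f wf (derive1 f t) (dmul rf (derive1 (derive1 f) t)) =
   - Sf (derive1 f t) (f t) - bd_f (fGamma (derive1 f t)) (dF (f t))
   + hstep R n * wf ord0 * bd_f (fGamma (derive1 f t)) (eta t).
  rewrite Emat_eq linfD; last exact: ip_f_linr.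
  rewrite SBP_f; congr (_ + _); rewrite /ip_f /bd_f.
  have inner : forall i, \sum_j wf j * derive1 f t i j *
      (\matrix_(i, j) (if j == ord0 then eta t i 0 else 0) : 'M[R]_(n.*2, (n.*2).+1)) i j
      = wf ord0 * (derive1 f t i ord0 * eta t i 0).
    move=> i; rewrite (bigD1 ord0) //= big1 => [|j jn0]; rewrite !mxE ?eqxx.
      by rewrite addr0 mulrA.
    by rewrite (negbTE jn0) mulr0.
  under eq_bigr do rewrite inner.
  rewrite -big_distrr /=.
  under [in RHS]eq_bigr do rewrite mxE.
  ring.
have A2 : ip_c wc (derive1 c t) (dmul rc (derive1 (derive1 c) t)) =
   - Sc (derive1 c t) (c t) + bd_c (cGamma (derive1 c t)) (dC (ct t)).
  by rewrite Hc SBP_c.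
apply: is_derive_eq.
  apply: is_derive_add2; [apply: is_derive_add2; [apply: is_derive_add2|]|].
  - exact: (deriv_bil (B := fun u v => ip_f wf u (dmul rf v))
      (fun v => ip_f_linl wf (dmul rf v)) (fun u => linf_comp rf (ip_f_linr wf u)) (f_d2 t) (f_d2 t)).
  - exact: (deriv_bil (spd_linl Sf_spd) (spd_linr Sf_spd) (f_d1 t) (f_d1 t)).
  - exact: (deriv_bil (B := fun u v => ip_c wc u (dmul rc v))
      (fun v => ip_c_linl wc (dmul rc v)) (fun u => linf_comp rc (ip_c_linr wc u)) (c_d2 t) (c_d2 t)).
  - exact: (deriv_bil (spd_linl Sc_spd) (spd_linr Sc_spd) (c_d1 t) (c_d1 t)).
rewrite -!derive1E -/c.
rewrite (ip_f_sym wf rf (derive1 (derive1 f) t)) (ip_c_sym wc rc (derive1 (derive1 c) t)).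
case: Sf_spd => _ Sfs _; case: Sc_spd => _ Scs _.
rewrite [Sf (f t) _]Sfs [Sc (c t) _]Scs A1 A2 HdC bd_cf -hPR -A3 bd_f_lin.
change (restr (ct t)) with (c t).
ring.
Qed.
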